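(* Let $M$ be a $3$-connected matroid with a $3$-connected minor $N$ where $|E(N)|\ge 4$. If $T$ is an $N$-grounded triangle of $M$ and $x\in T$, then $M/x$ does not have an $N$-minor.
   Context: ''Has an $N$-minor'' means has a minor isomorphic to $N$. A triangle $T$ of $M$ is $N$-grounded if for all distinct $a,b\in T$, none of $M/a/b$, $M/a\backslash b$, $M\backslash a/b$, $M\backslash a\backslash b$ has an $N$-minor. *)

(* Defs.v *)
From mathcomp Require Import all_boot.
Set Implicit Arguments. Unset Strict Implicit. Unset Printing Implicit Defensive.

Record mat (T : finType) := Mat { ground : {set T}; indep : pred {set T} }.

Definition is_matroid (T : finType) (M : mat T) : Prop :=
  [/\ indep M set0,
      forall I : {set T}, indep M I -> I \subset ground M,
      forall I J : {set T}, indep M J -> I \subset J -> indep M I &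
      forall I J : {set T}, indep M I -> indep M J -> #|I| < #|J| ->
        exists2 e, e \in J :\: I & indep M (e |: I)].

Definition rank (T : finType) (M : mat T) (X : {set T}) : nat :=
  \max_(I : {set T} | (I \subset X) && indep M I) #|I|.

Definition delete (T : finType) (M : mat T) (D : {set T}) : mat T :=
  Mat (ground M :\: D) (fun I => indep M I && (I \subset ground M :\: D)).

Definition contract (T : finType) (M : mat T) (C : {set T}) : mat T :=
  Mat (ground M :\: C)
      (fun I => (I \subset ground M :\: C) &&
         (rank M (I :|: (C :&: ground M)) == #|I| + rank M (C :&: ground M))).

Definition isomorphic (T T' : finType) (M : mat T) (N : mat T') : Prop :=
  exists f : T -> T',
    [/\ {in ground M &, injective f}, f @: ground M = ground N &
        forall I : {set T}, I \subset ground M -> indep M I = indep N (f @: I)].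

Definition has_minor (T T' : finType) (M : mat T) (N : mat T') : Prop :=
  exists C D : {set T},
    [/\ C \subset ground M, D \subset ground M, [disjoint C & D] &
        isomorphic (delete (contract M C) D) N].

(* Tutte connectivity: M is 3-connected if it has no k-separation, k < 3:
   no X ⊆ E with |X|,|E-X| >= k and r(X) + r(E-X) - r(M) < k. *)
Definition three_connected (T : finType) (M : mat T) : Prop :=
  forall (k : nat) (X : {set T}), 0 < k < 3 -> X \subset ground M ->
    k <= #|X| -> k <= #|ground M :\: X| ->
    rank M (ground M) + k <= rank M X + rank M (ground M :\: X).

Definition circuit (T : finType) (M : mat T) (C : {set T}) : Prop :=
  [/\ C \subset ground M, ~~ indep M C & forall e, e \in C -> indep M (C :\ e)].

Definition triangle (T : finType) (M : mat T) (Tr : {set T}) : Prop :=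
  circuit M Tr /\ #|Tr| = 3.

Definition grounded (T T' : finType) (M : mat T) (N : mat T') (Tr : {set T}) : Prop :=
  forall a b : T, a \in Tr -> b \in Tr -> a != b ->
    [/\ ~ has_minor (contract (contract M [set a]) [set b]) N,
        ~ has_minor (delete (contract M [set a]) [set b]) N,
        ~ has_minor (contract (delete M [set a]) [set b]) N &
        ~ has_minor (delete (delete M [set a]) [set b]) N].

(* Main.v *)
Require Import Defs.
From mathcomp Require Import all_boot zify.
Set Implicit Arguments. Unset Strict Implicit. Unset Printing Implicit Defensive.

Section R.
Variables (T : finType).
Implicit Types (M : mat T) (X Y I J C D : {set T}).

Lemma indep_le_rank M I X : indep M I -> I \subset X -> #|I| <= rank M X.
Proof. by move=> HI HX; rewrite /rank; apply: (leq_bigmax_cond I); rewrite HX HI. Qed.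

Lemma rank_wit M X : indep M set0 ->
  exists I, [/\ I \subset X, indep M I & #|I| = rank M X].
Proof.
move=> H0; rewrite /rank.
set P := (fun I : {set T} => (I \subset X) && indep M I).
have P0 : P set0 by rewrite /P sub0set H0.
rewrite (bigmax_eq_arg set0) //.
case: arg_maxnP => // I /andP[HIX HI] _.
by exists I.
Qed.

Lemma rank_mono M X Y : X \subset Y -> rank M X <= rank M Y.
Proof.
move=> HXY; apply/bigmax_leqP => I /andP[HI Hi].
by apply: indep_le_rank => //; apply: subset_trans HXY.
Qed.

Lemma rank_ext M I X : is_matroid M -> indep M I -> I \subset X ->
  exists J, [/\ I \subset J, J \subset X, indep M J & #|J| = rank M X].
Proof.
case=> H0 _ _ Haug.
move Hn: (rank M X - #|I|) => n.
elim: n I Hn => [|n IH] I Hn HI HIX.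
  exists I; split=> //; apply/eqP; rewrite eqn_leq indep_le_rank //=.
  by move/eqP: Hn; rewrite subn_eq0.
have [K [HKX HK HKc]] := rank_wit X H0.
have lt : #|I| < #|K| by rewrite HKc; rewrite -subn_gt0 Hn.
have [e He HeI] := Haug _ _ HI HK lt.
move: He; rewrite inE => /andP[eI eK].
have [||J [H1 H2 H3 H4]] := IH (e |: I) _ HeI.
- by rewrite cardsU1 eI add1n subnS Hn.
- by rewrite subUset sub1set (subsetP HKX) // HIX.
exists J; split=> //; apply: subset_trans H1; exact: subsetUr.
Qed.

Definition meq M1 M2 := ground M1 = ground M2 /\ forall I, indep M1 I = indep M2 I.

Lemma meq_rank M1 M2 X : meq M1 M2 -> rank M1 X = rank M2 X.
Proof. by case=> _ H; rewrite /rank; apply: eq_bigl => I; rewrite H. Qed.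

Lemma meq_sym M1 M2 : meq M1 M2 -> meq M2 M1.
Proof. by case=> H1 H2; split. Qed.

Lemma meq_trans M1 M2 M3 : meq M1 M2 -> meq M2 M3 -> meq M1 M3.
Proof. by case=> H1 H2 [H3 H4]; split=> [|I]; rewrite ?H1 ?H2. Qed.

Lemma meq_contract M1 M2 C : meq M1 M2 -> meq (contract M1 C) (contract M2 C).
Proof.
move=> H; have [Hg _] := H; split; rewrite /contract /= Hg // => I.
by rewrite !(meq_rank _ H).
Qed.

Lemma meq_delete M1 M2 D : meq M1 M2 -> meq (delete M1 D) (delete M2 D).
Proof. by case=> Hg Hi; split; rewrite /delete /= Hg // => I; rewrite Hi. Qed.

Lemma delete_delete M D1 D2 : meq (delete (delete M D1) D2) (delete M (D1 :|: D2)).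
Proof.
split; rewrite /delete /= setDDl // => I.
rewrite -andbA; congr (_ && _).
case H: (I \subset ground M :\: (D1 :|: D2)); rewrite ?andbT ?andbF //.
by apply: subset_trans H _; rewrite setDS // subsetUl.
Qed.

Lemma rank_delete M D Y : Y \subset ground M :\: D -> rank (delete M D) Y = rank M Y.
Proof.
move=> HY; rewrite /rank; apply: eq_bigl => I /=.
case HI: (I \subset Y) => //=.
by rewrite (subset_trans HI HY) andbT.
Qed.

Lemma contract_delete M C D : [disjoint C & D] ->
  meq (contract (delete M D) C) (delete (contract M C) D).
Proof.
move=> Hd; split; rewrite /contract /delete /=.
  by rewrite !setDDl setUC.
move=> I.
have E1 : C :&: (ground M :\: D) = C :&: ground M.
  apply/setP=> e; rewrite !inE; case eC: (e \in C) => //=.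
  by rewrite (disjointFr Hd eC).
rewrite E1 andbC.
case HI: (I \subset (ground M :\: D) :\: C); last first.
  have Hsw : (ground M :\: D) :\: C = (ground M :\: C) :\: D.
    by rewrite !setDDl setUC.
  by rewrite /= -Hsw HI !andbF.
have HID : I \subset ground M :\: D by apply: subset_trans HI (subsetDl _ _).
have HIC : I \subset ground M :\: C.
  by apply: subset_trans HI _; rewrite setDDl [D :|: C]setUC -setDDl subsetDl.
have Hsw : (ground M :\: D) :\: C = (ground M :\: C) :\: D.
  by rewrite !setDDl setUC.
have HCD : C :&: ground M \subset ground M :\: D.
  apply/subsetP=> e; rewrite !inE => /andP[eC ->]; by rewrite (disjointFr Hd eC).
rewrite HIC /= !rank_delete //.
- by rewrite -Hsw HI !andbT.
- by rewrite subUset HID HCD.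
Qed.

End R.

Section R2.
Variables (T : finType).
Implicit Types (M : mat T) (X Y I J C D : {set T}).

Lemma rank_contract M C Y : is_matroid M -> Y \subset ground M :\: C ->
  rank (contract M C) Y + rank M (C :&: ground M) = rank M (Y :|: (C :&: ground M)).
Proof.
move=> Hm HY; have [H0 Hsub Hdown Haug] := Hm.
set C0 := C :&: ground M.
apply/eqP; rewrite eqn_leq; apply/andP; split.
  have H0c : indep (contract M C) set0 by rewrite /= sub0set set0U cards0 add0n eqxx.
  have [J [HJY HJ HJc]] := rank_wit Y H0c.
  move: HJ => /= /andP[_ /eqP HJr].
  rewrite -HJc -HJr; apply: rank_mono; exact: setSU.
have [B [HBC HB HBc]] := rank_wit C0 H0.
have [J' [HBJ HJY HJ HJc]] := @rank_ext _ M B (Y :|: C0) Hm HB (subset_trans HBC (subsetUr _ _)).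
set J := J' :\: C0.
have h1 : #|J' :&: C0| <= rank M C0.
  apply: indep_le_rank; [apply: Hdown HJ _; exact: subsetIl | exact: subsetIr].
have h2 : #|B| <= #|J' :&: C0| by apply: subset_leq_card; rewrite subsetI HBJ HBC.
have h3 := cardsID C0 J'.
have HJY' : J \subset Y.
  apply/subsetP=> e; rewrite inE => /andP[eC eJ].
  by move: (subsetP HJY e eJ); rewrite inE (negbTE eC) orbF.
have h4 : rank M (J :|: C0) <= rank M (Y :|: C0) by apply: rank_mono; exact: setSU.
have h5 : #|J'| <= rank M (J :|: C0).
  apply: indep_le_rank => //; apply/subsetP=> e eJ.
  rewrite /J in_setU in_setD eJ andbT; exact: orNb.
rewrite -/J in h3.
have HJind : indep (contract M C) J.
  rewrite /= (subset_trans HJY' HY) /=; apply/eqP.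
  rewrite -/C0; lia.
have h6 : #|J| <= rank (contract M C) Y by apply: indep_le_rank.
lia.
Qed.

Lemma contract_contract M C1 C2 : is_matroid M ->
  meq (contract (contract M C1) C2) (contract M (C1 :|: C2)).
Proof.
move=> Hm; split; rewrite /contract /=; first by rewrite setDDl.
move=> I; rewrite setDDl.
case HI: (I \subset ground M :\: (C1 :|: C2)) => //=.
have HY1 : I :|: C2 :&: (ground M :\: C1) \subset ground M :\: C1.
  rewrite subUset subsetIr andbT; apply: subset_trans HI _.
  by rewrite setDS // subsetUl.
have HY2 : C2 :&: (ground M :\: C1) \subset ground M :\: C1 by rewrite subsetIr.
have E1 := rank_contract Hm HY1.
have E2 := rank_contract Hm HY2.
have S1 : I :|: C2 :&: (ground M :\: C1) :|: C1 :&: ground M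
          = I :|: (C1 :|: C2) :&: ground M.
  apply/setP=> e; rewrite !inE.
  by case: (e \in I); case: (e \in C1); case: (e \in C2); case: (e \in ground M).
have S2 : C2 :&: (ground M :\: C1) :|: C1 :&: ground M = (C1 :|: C2) :&: ground M.
  apply/setP=> e; rewrite !inE.
  by case: (e \in C1); case: (e \in C2); case: (e \in ground M).
rewrite S1 in E1; rewrite S2 in E2.
rewrite -E1 -E2.
fold (contract M C1).
apply/eqP/eqP => h; lia.
Qed.

End R2.

Lemma iso_meq (T T' : finType) (M1 M2 : mat T) (N : mat T') :
  meq M1 M2 -> isomorphic M1 N -> isomorphic M2 N.
Proof.
case=> Hg Hi [f [Hinj Him Hind]]; exists f; rewrite -Hg; split=> // I HI.
by rewrite -Hi Hind.
Qed.

Lemma tri_rank (T : finType) (M : mat T) Tr C0 a b : is_matroid M ->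
  ~~ indep M Tr -> indep M (Tr :\ a) -> a \in Tr -> Tr :\ a \subset b |: C0 ->
  rank M ([set a; b] :|: C0) != 2 + rank M C0.
Proof.
move=> Hm HTd HTa aT Hsub; have [H0 Hs Hdown Haug] := Hm.
apply/negP => /eqP Hr.
have HX : Tr :\ a \subset [set a; b] :|: C0.
  apply: subset_trans Hsub _; apply/subsetP=> e; rewrite !inE.
  by move=> /orP[->|->]; rewrite ?orbT.
have [K [HIK HKX HK HKc]] := rank_ext Hm HTa HX.
have aK : a \notin K.
  apply/negP=> aK; move/negP: HTd; apply; apply: Hdown HK _.
  apply/subsetP=> e eT; case: (e =P a) => [->//|/eqP ne].
  by apply: (subsetP HIK); rewrite !inE ne eT.
have HKs : K \subset b |: (K :&: C0).
  apply/subsetP=> e eK; move: (subsetP HKX e eK); rewrite !inE eK.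
  case: (e =P a) => [ea|_]; first by move: aK; rewrite -ea eK.
  by case: (e == b).
have h1 := subset_leq_card HKs.
have h2 : #|K :&: C0| <= rank M C0.
  apply: indep_le_rank; [apply: Hdown HK _; exact: subsetIl | exact: subsetIr].
rewrite cardsU1 in h1.
have h3 : (b \notin K :&: C0) <= 1 by case: (b \notin _).
lia.
Qed.

Lemma no_par (T' : finType) (N : mat T') u v : three_connected N ->
  4 <= #|ground N| -> u \in ground N -> v \in ground N -> u != v ->
  ~~ indep N [set u; v] -> False.
Proof.
move=> HNc H4 uN vN uv Hd.
have HX : [set u; v] \subset ground N by apply/subsetP=> e; rewrite !inE => /orP[]/eqP->.
have c2 : #|[set u; v]| = 2 by rewrite cards2 uv.
have H := HNc 2 [set u; v] erefl HX.
have cD : #|ground N :\: [set u; v]| = #|ground N| - 2.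
  by rewrite cardsD (setIidPr HX) c2.
have r1 : rank N [set u; v] <= 1.
  apply/bigmax_leqP => I /andP[HIX HI].
  case: (I =P [set u; v]) => [E|/eqP ne]; first by move: Hd; rewrite -E HI.
  have : I \proper [set u; v] by rewrite properEneq ne HIX.
  by move/proper_card; rewrite c2.
have r2 : rank N (ground N :\: [set u; v]) <= rank N (ground N).
  by apply: rank_mono; exact: subsetDl.
have := H; rewrite c2 cD => /(_ erefl); move=> /(_ ltac:(lia)). lia.
Qed.

Lemma elimC (T T' : finType) (M : mat T) (N : mat T') (x y : T) (C D : {set T}) :
  is_matroid M -> C \subset ground M :\: [set x] -> D \subset ground M :\: [set x] ->
  [disjoint C & D] -> isomorphic (delete (contract (contract M [set x]) C) D) N ->
  y \in C -> has_minor (contract (contract M [set x]) [set y]) N.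
Proof.
move=> Hm HC HD Hd Hiso yC.
exists (C :\ y), D; split.
- by rewrite /= setSD.
- rewrite /= subsetD HD /= disjoint_sym disjoints1.
  by rewrite (disjointFr Hd yC).
- by apply: disjointWl Hd; exact: subsetDl.
apply: iso_meq Hiso; apply: meq_delete.
apply: meq_trans (contract_contract _ _ Hm) _.
apply: meq_sym; apply: meq_trans (meq_contract _ (contract_contract _ _ Hm)) _.
apply: meq_trans (contract_contract _ _ Hm) _.
have -> : [set x] :|: [set y] :|: C :\ y = [set x] :|: C.
  apply/setP=> e; rewrite !inE; case: (e =P y) => [->|_]; rewrite ?yC ?orbT //=; by case: (e == x).
by split.
Qed.

Lemma elimD (T T' : finType) (M : mat T) (N : mat T') (x y : T) (C D : {set T}) :
  C \subset ground M :\: [set x] -> D \subset ground M :\: [set x] ->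
  [disjoint C & D] -> isomorphic (delete (contract (contract M [set x]) C) D) N ->
  y \in D -> has_minor (delete (contract M [set x]) [set y]) N.
Proof.
move=> HC HD Hd Hiso yD.
have yC : y \notin C by rewrite (disjointFl Hd yD).
exists C, (D :\ y); split.
- by rewrite /= subsetD HC /= disjoint_sym disjoints1.
- by rewrite /= setSD.
- by apply: disjointWr Hd; exact: subsetDl.
apply: iso_meq Hiso.
apply: meq_sym.
apply: meq_trans (meq_delete _ (contract_delete _ _)) _.
  by rewrite disjoint_sym disjoints1.
apply: meq_trans (delete_delete _ _ _) _.
by rewrite setD1K //; split.
Qed.

Theorem lemma3p1 (T T' : finType) (M : mat T) (N : mat T') :
  is_matroid M -> is_matroid N ->
  three_connected M -> three_connected N ->
  has_minor M N -> 4 <= #|ground N| ->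
  forall (Tr : {set T}), triangle M Tr -> grounded M N Tr ->
  forall x, x \in Tr -> ~ has_minor (contract M [set x]) N.
Proof.
move=> Hm HN HMc HNc _ HN4 Tr [[HTr HTd HTc] HT3] Hg x HxT [C [D [HC HD Hdisj Hiso]]].
have HC' : C \subset ground M :\: [set x] by [].
have HD' : D \subset ground M :\: [set x] by [].
have : #|Tr :\ x| == 2 by move: HT3; rewrite (cardsD1 x) HxT add1n => -[->].
case/cards2P => a [b [ab Hab]].
have HabP : Tr :\ x =i [set a; b] by apply/setP.
have HTm : forall e, (e \in Tr) = [|| e == x, e == a | e == b].
  move=> e; case: (e =P x) => [->|/eqP ne]; first by rewrite HxT.
  by have := HabP e; rewrite !inE ne /=.
have aT : a \in Tr by rewrite HTm eqxx orbT.
have bT : b \in Tr by rewrite HTm eqxx !orbT.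
have ax : a != x by have := HabP a; rewrite !inE eqxx /= => /andP[].
have bx : b != x by have := HabP b; rewrite !inE eqxx orbT /= => /andP[].
have xa : x != a by rewrite eq_sym.
have [gaC gaD _ _] := Hg x a HxT aT xa.
have xb : x != b by rewrite eq_sym.
have [gbC gbD _ _] := Hg x b HxT bT xb.
case aC: (a \in C); first by apply: gaC; exact: elimC Hm HC' HD' Hdisj Hiso aC.
case aD: (a \in D); first by apply: gaD; exact: elimD HC' HD' Hdisj Hiso aD.
case bC: (b \in C); first by apply: gbC; exact: elimC Hm HC' HD' Hdisj Hiso bC.
case bD: (b \in D); first by apply: gbD; exact: elimD HC' HD' Hdisj Hiso bD.
have [f [Hinj Him Hind]] := Hiso.
have aG : a \in ground (delete (contract (contract M [set x]) C) D).
  by rewrite /= !inE aC aD ax (subsetP HTr a aT).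
have bG : b \in ground (delete (contract (contract M [set x]) C) D).
  by rewrite /= !inE bC bD bx (subsetP HTr b bT).
have HabG : [set a; b] \subset ground (delete (contract (contract M [set x]) C) D).
  by apply/subsetP=> e /set2P[]->.
have Hdep : indep (delete (contract (contract M [set x]) C) D) [set a; b] = false.
  have [_ Hi] := contract_contract [set x] C Hm.
  have -> : indep (delete (contract (contract M [set x]) C) D) [set a; b] =
    indep (contract (contract M [set x]) C) [set a; b] &&
    ([set a; b] \subset ground (contract (contract M [set x]) C) :\: D) by [].
  rewrite Hi /=.
  have c2 : #|[set a; b]| = 2 by rewrite cards2 ab.
  have Hsub : Tr :\ a \subset b |: (([set x] :|: C) :&: ground M).
    apply/subsetP=> e; rewrite !inE HTm => /andP[ea].
    rewrite (negbTE ea) /= => /orP[/eqP->|->]; last by [].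
    by rewrite eqxx (subsetP HTr x HxT) orbT.
  have := tri_rank Hm HTd (HTc a aT) aT Hsub.
  by rewrite c2 => /negbTE ->; rewrite andbF.
rewrite Hind // imsetU1 imset_set1 in Hdep.
apply: (no_par HNc HN4 _ _ _ (negbT Hdep)).
- by rewrite -Him; apply: imset_f.
- by rewrite -Him; apply: imset_f.
apply/negP=> /eqP h; move: (Hinj a b aG bG h) => e; by rewrite e eqxx in ab.
Qed.
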